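(* Let $\Sigma$ be a Riemann surface with a holomorphic cubic differential $\phi$ having a pole of order $n+3\ge4$ at a puncture $p$, and identify a punctured closed neighborhood of $p$ with the glued surface $M$ built from the closed half-planes $\overline H_1,\dots,\overline H_n$ (each $\overline H_i\cong\{w:\mathrm{Re}\,w\ge0\}$ with $\phi=dw^3$) as described in the context. Let $g$ be a conformal metric on $\Sigma$ satisfying $\kappa_g=-1+\|\phi\|_g^2$ with $\kappa_g\le0$. Then there are constants $C,r_0>0$ such that for every $i\in\{1,\dots,n\}$, writing $g=e^{u}|dw|^2$ on $\overline H_i$, one has $0\le u(w)\le C|w|^{1/2}e^{-\sqrt6|w|}$ for all $w\in\overline H_i$ with $|w|\ge r_0$.
   Context: For $g=e^u|dw|^2$, $\phi=\phi(w)dw^3$: $\|\phi\|_g^2=e^{-3u}|\phi|^2$, $\kappa_g=-\frac12e^{-u}\Delta u$. The surface $M$: there are $a_i>0$, $b_i\in\mathbb R$; in $\overline H_i$ let $T_i=\{ib_i+\rho e^{i\theta}:\rho\ge0,\pi/6\le\theta\le\pi/2\}$ and $B_i=\{i(b_i-a_i)+\rho e^{i\theta}:\rho\ge0,-\pi/2\le\theta\le-\pi/6\}$; $M$ is the quotient of $\bigsqcup\overline H_i$ gluing $B_{i+1}$ to $T_i$ (indices mod $n$) by $w\mapsto e^{2\pi i/3}(w-i(b_{i+1}-a_{i+1}))+ib_i$; the identification with a punctured closed neighborhood of $p$ carries $\phi$ to the cubic differential induced by $dw^3$ (such an identification always exists). *)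

(* Defs.v *)
(* A point w = x + i y of C is written as a pair of
   real coordinates (x, y); functions on a closed half-plane are real functions
   of two real variables. *)
From Stdlib Require Import Reals Lra.
From Coquelicot Require Import Coquelicot.
Open Scope R_scope.

Definition D1 (f : R -> R -> R) : R -> R -> R := fun x y => Derive (fun t => f t y) x.
Definition D2 (f : R -> R -> R) : R -> R -> R := fun x y => Derive (fun t => f x t) y.

Definition cont2 (f : R -> R -> R) (x y : R) : Prop :=
  continuous (fun z : R * R => f (fst z) (snd z)) (x, y).

Definition C2_on (U : R -> R -> Prop) (f : R -> R -> R) : Prop :=
  forall x y, U x y ->
    ex_derive (fun t => f t y) x /\ ex_derive (fun t => f x t) y /\
    ex_derive (fun t => D1 f t y) x /\ ex_derive (fun t => D1 f x t) y /\
    ex_derive (fun t => D2 f t y) x /\ ex_derive (fun t => D2 f x t) y /\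
    cont2 f x y /\ cont2 (D1 f) x y /\ cont2 (D2 f) x y /\
    cont2 (D1 (D1 f)) x y /\ cont2 (D2 (D1 f)) x y /\
    cont2 (D1 (D2 f)) x y /\ cont2 (D2 (D2 f)) x y.

Definition laplacian (f : R -> R -> R) (x y : R) : R :=
  D1 (D1 f) x y + D2 (D2 f) x y.

Definition open_half (x y : R) : Prop := 0 < x.
Definition closed_half (x y : R) : Prop := 0 <= x.

(* For g = e^u |dw|^2:  kappa_g = -1/2 e^{-u} Delta u *)
Definition gauss_curv (u : R -> R -> R) (x y : R) : R :=
  - / 2 * exp (- u x y) * laplacian u x y.

(* For phi = dw^3 (|phi| = 1):  ||phi||_g^2 = e^{-3u} |phi|^2 = e^{-3u} *)
Definition phi_norm2 (u : R -> R -> R) (x y : R) : R := exp (- 3 * u x y).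

Definition modw (x y : R) : R := sqrt (x ^ 2 + y ^ 2).

(* B_j = { i(b_j - a_j) + rho e^{i theta} : rho >= 0, -pi/2 <= theta <= -pi/6 },
   with c = b_j - a_j: X = x >= 0 and Y = y - c <= - X / sqrt 3. *)
Definition in_B (c x y : R) : Prop := 0 <= x /\ sqrt 3 * (y - c) <= - x.

(* gluing map w |-> e^{2 pi i/3} (w - i c) + i b, with c = b_{i+1} - a_{i+1}, b = b_i,
   e^{2 pi i/3} = -1/2 + i sqrt3/2 *)
Definition glue_x (c b x y : R) : R := - x / 2 - sqrt 3 * (y - c) / 2.
Definition glue_y (c b x y : R) : R := sqrt 3 * x / 2 - (y - c) / 2 + b.

(* Main.v *)
Require Import Defs.
From Stdlib Require Import Reals Lra Lia Arith ClassicalEpsilon.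
From Coquelicot Require Import Coquelicot.
Open Scope R_scope.


Lemma deriv_cont (f : R -> R) (df : R) x : is_derive f x df -> continuity_pt f x.
Proof.
  intro H. apply continuity_pt_filterlim. apply (@ex_derive_continuous R_AbsRing R_NormedModule f x). exists df; exact H.
Qed.

Lemma taylor_up (f f1 f2 : R -> R) (s0 d A : R) :
  0 < d ->
  (forall t, Rabs (t - s0) < d -> is_derive f t (f1 t) /\ is_derive f1 t (f2 t) /\ f2 t <= A) ->
  forall h, Rabs h < d -> f (s0 + h) <= f s0 + f1 s0 * h + A * h^2 / 2.
Proof.
  intros Hd H h Hh.
  set (k := fun t => f t - (f s0 + f1 s0 * (t - s0) + A * (t - s0)^2 / 2)).
  set (k1 := fun t => f1 t - (f1 s0 + A * (t - s0))).
  assert (Hin : forall t, Rmin s0 (s0+h) <= t <= Rmax s0 (s0+h) -> Rabs (t - s0) < d).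
  { intros t [H1 H2]. unfold Rmin, Rmax in *. apply Rabs_def2 in Hh. destruct (Rle_dec s0 (s0+h));
    apply Rabs_def1; lra. }
  assert (Hk : forall t, Rabs (t - s0) < d -> is_derive k t (k1 t)).
  { intros t Ht. destruct (H t Ht) as [H1 _]. unfold k, k1.
    apply (is_derive_minus _ _ _ _ _ H1).
    auto_derive; [exact I| field]. }
  destruct (MVT_gen k s0 (s0+h) k1) as [c [Hc Hkc]].
  { intros t Ht. apply Hk, Hin; lra. }
  { intros t Ht. apply (deriv_cont _ (k1 t)). apply Hk, Hin; lra. }
  assert (Hc' : Rabs (c - s0) < d) by (apply Hin; lra).
  destruct (MVT_gen f1 s0 c f2) as [e [He Hfe]].
  { intros t Ht. apply H. apply Rabs_def2 in Hc'. unfold Rmin, Rmax in Ht.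
    destruct (Rle_dec s0 c); apply Rabs_def1; lra. }
  { intros t Ht. apply (deriv_cont _ (f2 t)). apply H. apply Rabs_def2 in Hc'. unfold Rmin, Rmax in Ht.
    destruct (Rle_dec s0 c); apply Rabs_def1; lra. }
  assert (He' : Rabs (e - s0) < d).
  { apply Rabs_def2 in Hc'. unfold Rmin, Rmax in He. destruct (Rle_dec s0 c); apply Rabs_def1; lra. }
  destruct (H e He') as [_ [_ HA]].
  assert (Hk0 : k s0 = 0) by (unfold k; field).
  assert (Hsign : 0 <= (c - s0) * h).
  { unfold Rmin, Rmax in Hc. destruct (Rle_dec s0 (s0+h)); nra. }
  assert (k (s0 + h) <= 0).
  { replace (k (s0+h)) with (k1 c * (s0 + h - s0)) by (rewrite <- Hkc, Hk0; ring).
    unfold k1. replace (f1 c - (f1 s0 + A * (c - s0))) with ((f2 e - A) * (c - s0)) by nra.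
    replace (s0 + h - s0) with h by ring. nra. }
  unfold k in H0. replace (s0 + h - s0) with h in H0 by ring. lra.
Qed.

Lemma taylor_low (f f1 f2 : R -> R) (s0 d B : R) :
  0 < d ->
  (forall t, Rabs (t - s0) < d -> is_derive f t (f1 t) /\ is_derive f1 t (f2 t) /\ B <= f2 t) ->
  forall h, Rabs h < d -> f s0 + f1 s0 * h + B * h^2 / 2 <= f (s0 + h).
Proof.
  intros Hd H h Hh.
  pose proof (taylor_up (fun t => - f t) (fun t => - f1 t) (fun t => - f2 t) s0 d (-B) Hd) as T.
  assert (T' := T ltac:(intros t Ht; destruct (H t Ht) as [H1 [H2 H3]];
    split; [apply (is_derive_opp _ _ _ H1)|split; [apply (is_derive_opp _ _ _ H2)|lra]]) h Hh).
  simpl in T'. lra.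
Qed.


Definition cont_at (g : R -> R) (s0 : R) := forall eps, 0 < eps -> exists del, 0 < del /\
  forall t, Rabs (t - s0) < del -> Rabs (g t - g s0) < eps.

Definition cont2e (f : R -> R -> R) (x y : R) := forall eps, 0 < eps -> exists del, 0 < del /\
  forall x' y', Rabs (x' - x) < del -> Rabs (y' - y) < del -> Rabs (f x' y' - f x y) < eps.

Lemma cont2_e f x y : cont2 f x y -> cont2e f x y.
Proof.
  intros H eps Heps. apply continuity_2d_pt_filterlim in H.
  destruct (H (mkposreal eps Heps)) as [d Hd]. exists d. split; [apply cond_pos|]. 
  intros; apply Hd; auto.
Qed.

Lemma cont2e_slice1 f x y : cont2e f x y -> cont_at (fun t => f t y) x.
Proof. intros H eps He. destruct (H eps He) as [d [Hd H']]. exists d; split; auto.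
  intros t Ht. apply H'; auto. replace (y - y) with 0 by ring. rewrite Rabs_R0; auto. Qed.

Lemma cont2e_slice2 f x y : cont2e f x y -> cont_at (fun t => f x t) y.
Proof. intros H eps He. destruct (H eps He) as [d [Hd H']]. exists d; split; auto.
  intros t Ht. apply H'; auto. replace (x - x) with 0 by ring. rewrite Rabs_R0; auto. Qed.

Lemma max_slice (f f1 f2 psi : R -> R) (s0 d K : R) :
  0 < d ->
  (forall t, Rabs (t - s0) < d -> is_derive f t (f1 t) /\ is_derive f1 t (f2 t)) ->
  cont_at f2 s0 ->
  (forall h, Rabs h < d -> f (s0 + h) - f s0 <= psi (s0 + h) - psi s0) ->
  (forall h, Rabs h < d -> psi (s0 + h) + psi (s0 - h) - 2 * psi s0 <= K * h^2) ->
  f2 s0 <= K.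
Proof.
  intros Hd Hder Hc Hmax Hpsi.
  destruct (Rle_or_lt (f2 s0) K) as [|Hlt]; auto. exfalso.
  set (eta := (f2 s0 - K)/2).
  destruct (Hc eta ltac:(unfold eta; lra)) as [d' [Hd' Hc']].
  set (d2 := Rmin d d').
  assert (Hd2 : 0 < d2) by (unfold d2; apply Rmin_pos; auto).
  assert (HT := taylor_low f f1 f2 s0 d2 (f2 s0 - eta) Hd2).
  assert (HT' : forall h, Rabs h < d2 -> f s0 + f1 s0 * h + (f2 s0 - eta) * h ^ 2 / 2 <= f (s0 + h)).
  { apply HT. intros t Ht. assert (Rabs (t - s0) < d) by (eapply Rlt_le_trans; [exact Ht| apply Rmin_l]).
    destruct (Hder t H) as [H1 H2]. split; [auto| split; auto].
    assert (Rabs (f2 t - f2 s0) < eta) by (apply Hc'; eapply Rlt_le_trans; [exact Ht| apply Rmin_r]).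
    apply Rabs_def2 in H0. lra. }
  set (h := d2 / 2).
  assert (Hh : Rabs h < d2) by (unfold h; rewrite Rabs_pos_eq; lra).
  assert (Hh' : Rabs (-h) < d2) by (rewrite Rabs_Ropp; auto).
  assert (Hhd : Rabs h < d) by (eapply Rlt_le_trans; [exact Hh| apply Rmin_l]).
  assert (Hhd' : Rabs (-h) < d) by (rewrite Rabs_Ropp; auto).
  assert (E1 := HT' h Hh). assert (E2 := HT' (-h) Hh').
  assert (M1 := Hmax h Hhd). assert (M2 := Hmax (-h) Hhd').
  assert (P := Hpsi h Hhd).
  replace (s0 + - h) with (s0 - h) in E2, M2 by ring.
  assert (Hpos : 0 < h ^ 2) by (unfold h; nra).
  assert ((f2 s0 - eta) * h^2 <= K * h^2) by nra.
  apply Rmult_le_reg_r in H; [|exact Hpos]. unfold eta in H. lra.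
Qed.


Lemma cont_at_pt g s0 : cont_at g s0 -> continuity_pt g s0.
Proof.
  intros H eps Heps. destruct (H eps Heps) as [d [Hd H']]. exists d; split; auto.
  intros x [_ Hx]. apply H'. exact Hx.
Qed.

Definition clamp a b x := Rmax a (Rmin b x).

Lemma clamp_in a b x : a <= b -> a <= clamp a b x <= b.
Proof. intros. unfold clamp, Rmax, Rmin. repeat destruct Rle_dec; lra. Qed.
Lemma clamp_id a b x : a <= x <= b -> clamp a b x = x.
Proof. intros. unfold clamp, Rmax, Rmin. repeat destruct Rle_dec; lra. Qed.
Lemma clamp_lip a b x x' : a <= b -> Rabs (clamp a b x' - clamp a b x) <= Rabs (x' - x).
Proof. intros. unfold clamp, Rmax, Rmin. repeat destruct Rle_dec; unfold Rabs; repeat destruct Rcase_abs; lra. Qed.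

Lemma evt2 (f : R -> R -> R) a b c d : a <= b -> c <= d ->
  (forall x y, a <= x <= b -> c <= y <= d -> continuity_2d_pt f x y) ->
  exists x0 y0, a <= x0 <= b /\ c <= y0 <= d /\
    forall x y, a <= x <= b -> c <= y <= d -> f x y <= f x0 y0.
Proof.
  intros Hab Hcd Hf.
  assert (Hex : forall x, exists y, c <= y <= d /\ forall y', c <= y' <= d -> f (clamp a b x) y' <= f (clamp a b x) y).
  { intro x. destruct (continuity_ab_maj (fun y => f (clamp a b x) y) c d Hcd) as [My [H1 H2]].
    { intros y Hy. apply cont_at_pt. intros eps He.
      destruct (Hf (clamp a b x) y (clamp_in a b x Hab) Hy (mkposreal eps He)) as [del Hdel].
      exists del; split; [apply cond_pos|]. intros t Ht. apply Hdel; auto.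
      replace (clamp a b x - clamp a b x) with 0 by ring. rewrite Rabs_R0; apply cond_pos. }
    exists My; split; auto. }
  set (Y := fun x => proj1_sig (constructive_indefinite_description _ (Hex x))).
  assert (HY : forall x, c <= Y x <= d /\ forall y', c <= y' <= d -> f (clamp a b x) y' <= f (clamp a b x) (Y x)).
  { intro x. unfold Y. destruct (constructive_indefinite_description _ (Hex x)); simpl; auto. }
  set (g := fun x => f (clamp a b x) (Y x)).
  destruct (continuity_ab_maj g a b Hab) as [Mx [HM HMx]].
  { intros x Hx. apply cont_at_pt. intros eps He.
    destruct (uniform_continuity_2d f a b c d) with (eps := mkposreal eps He) as [del Hdel].
    { intros; apply Hf; auto. }
    exists del; split; [apply cond_pos|]. intros t Ht.
    assert (Hcl := clamp_lip a b x t Hab).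
    destruct (HY x) as [Yx HYx]. destruct (HY t) as [Yt HYt].
    assert (A1 : Rabs (f (clamp a b t) (Y x) - f (clamp a b x) (Y x)) < eps).
    { apply Hdel; auto using clamp_in. lra. replace (Y x - Y x) with 0 by ring. rewrite Rabs_R0; apply cond_pos. }
    assert (A2 : Rabs (f (clamp a b x) (Y t) - f (clamp a b t) (Y t)) < eps).
    { apply Hdel; auto using clamp_in. rewrite Rabs_minus_sym. lra. replace (Y t - Y t) with 0 by ring. rewrite Rabs_R0; apply cond_pos. }
    assert (B1 := HYt (Y x) Yx). assert (B2 := HYx (Y t) Yt).
    apply Rabs_def2 in A1. apply Rabs_def2 in A2. unfold g. apply Rabs_def1; lra. }
  exists Mx, (Y Mx). destruct (HY Mx) as [HY1 _]. split; auto. split; auto.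
  intros x y Hx Hy. assert (H1 := HM x Hx). unfold g in H1.
  rewrite (clamp_id a b x Hx) in H1. rewrite (clamp_id a b Mx HMx) in H1.
  destruct (HY x) as [_ HYx]. assert (H2 := HYx y Hy). rewrite (clamp_id a b x Hx) in H2. lra.
Qed.


Lemma exp_le_exp a b : a <= b -> exp a <= exp b.
Proof. intro H. destruct (Rle_lt_or_eq_dec a b H) as [H1|H1]; [left; apply exp_increasing; auto| right; rewrite H1; auto]. Qed.

Definition F (s : R) := 2 * exp s - 2 * exp (-2 * s).

Lemma F_incr a t : 0 <= a -> 0 <= t -> F a + 2 * t <= F (a + t).
Proof.
  intros Ha Ht. unfold F.
  rewrite exp_plus. replace (-2 * (a + t)) with (-2 * a + -2 * t) by ring. rewrite exp_plus.
  assert (1 + t <= exp t) by apply exp_ineq1_le.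
  assert (1 <= exp a) by (rewrite <- exp_0; apply exp_le_exp; lra).
  assert (exp (-2 * t) <= 1) by (rewrite <- exp_0; apply exp_le_exp; lra).
  assert (0 < exp (-2 * a)) by apply exp_pos.
  assert (0 < exp (-2 * t)) by apply exp_pos.
  nra.
Qed.

Lemma F_0 : F 0 = 0.
Proof. unfold F. replace (-2 * 0) with 0 by ring. ring. Qed.

Lemma F_nonneg s : 0 <= s -> 0 <= F s.
Proof. intros. pose proof (F_incr 0 s (Rle_refl 0) H). rewrite F_0 in H0. replace (0 + s) with s in H0 by ring. lra. Qed.

Lemma exp_cubic x : 0 <= x -> 1 + x + x^2/2 + x^3/6 <= exp x.
Proof.
  intro Hx. pose proof (exp_ge_taylor x 3 Hx) as H. simpl in H. lra.
Qed.

Lemma F_quad s : 0 <= s -> 6 * s - 3 * s^2 <= F s.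
Proof.
  intro Hs. unfold F.
  assert (H1 := exp_cubic s Hs). assert (H2 := exp_cubic (2*s) ltac:(lra)).
  set (p := 1 + 2 * s + (2 * s) ^ 2 / 2 + (2 * s) ^ 3 / 6) in *.
  set (w := 2 - 4 * s + 4 * s^2 + s^3/3).
  assert (Hp : 0 < p) by (unfold p; nra).
  assert (Hwp : 2 <= w * p) by (unfold w, p; assert (0 <= s^3) by (apply pow_le; lra);
     assert (0 <= s^4) by (apply pow_le; lra); assert (0 <= s^5) by (apply pow_le; lra);
     assert (0 <= s^6) by (apply pow_le; lra); nra).
  replace (-2 * s) with (- (2 * s)) by ring. rewrite exp_Ropp.
  assert (0 < exp (2*s)) by apply exp_pos.
  assert (/ exp (2 * s) <= / p) by (apply Rinv_le_contravar; lra).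
  assert (/ p <= w / 2).
  { apply (Rmult_le_reg_r p); auto. field_simplify; lra. }
  unfold w in H3. lra.
Qed.

Lemma lap_F (u : R -> R -> R) x y :
  gauss_curv u x y = -1 + phi_norm2 u x y -> laplacian u x y = F (u x y).
Proof.
  unfold gauss_curv, phi_norm2, F. intro H.
  assert (E1 : exp (- u x y) * exp (u x y) = 1) by (rewrite <- exp_plus; replace (- u x y + u x y) with 0 by ring; apply exp_0).
  assert (E2 : exp (-3 * u x y) * exp (u x y) = exp (-2 * u x y)) by (rewrite <- exp_plus; f_equal; ring).
  assert (H' : (- / 2 * exp (- u x y) * laplacian u x y) * (-2 * exp (u x y)) = (-1 + exp (-3 * u x y)) * (-2 * exp (u x y))) by (rewrite H; auto).
  replace ((- / 2 * exp (- u x y) * laplacian u x y) * (-2 * exp (u x y))) with (laplacian u x y * (exp (- u x y) * exp (u x y))) in H' by field.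
  rewrite E1 in H'. rewrite Rmult_plus_distr_r in H'.
  replace (exp (-3 * u x y) * (-2 * exp (u x y))) with (-2 * (exp (-3 * u x y) * exp (u x y))) in H' by ring.
  rewrite E2 in H'. lra.
Qed.

Lemma u_nonneg_pt (u : R -> R -> R) x y :
  gauss_curv u x y = -1 + phi_norm2 u x y -> gauss_curv u x y <= 0 -> 0 <= u x y.
Proof.
  unfold phi_norm2. intros H1 H2. rewrite H1 in H2.
  destruct (Rle_or_lt 0 (u x y)); auto.
  assert (exp 0 < exp (-3 * u x y)) by (apply exp_increasing; lra). rewrite exp_0 in H0. lra.
Qed.

Lemma pt_cont_at g s0 : continuity_pt g s0 -> cont_at g s0.
Proof.
  intros H eps Heps. destruct (H eps Heps) as [d [Hd H']]. exists d; split; auto.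
  intros t Ht. destruct (Req_dec t s0) as [->|Hne].
  - replace (g s0 - g s0) with 0 by ring. rewrite Rabs_R0; auto.
  - apply (H' t). split; [split; [exact I| auto]| exact Ht].
Qed.

Lemma sym_taylor (f f1 f2 : R -> R) s0 d : 0 < d ->
  (forall t, Rabs (t - s0) < d -> is_derive f t (f1 t) /\ is_derive f1 t (f2 t)) ->
  cont_at f2 s0 ->
  forall eta, 0 < eta -> exists del, 0 < del /\ forall h, Rabs h < del ->
    f (s0 + h) + f (s0 - h) - 2 * f s0 <= (f2 s0 + eta) * h^2.
Proof.
  intros Hd Hder Hc eta He.
  destruct (Hc (eta) ltac:(lra)) as [d' [Hd' Hc']].
  exists (Rmin d d'); split; [apply Rmin_pos; auto|]. intros h Hh.
  assert (HT := taylor_up f f1 f2 s0 (Rmin d d') (f2 s0 + eta) ltac:(apply Rmin_pos; auto)).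
  assert (HT' : forall h, Rabs h < Rmin d d' -> f (s0 + h) <= f s0 + f1 s0 * h + (f2 s0 + eta) * h ^ 2 / 2).
  { apply HT. intros t Ht. assert (Rabs (t - s0) < d) by (eapply Rlt_le_trans; [exact Ht| apply Rmin_l]).
    destruct (Hder t H) as [H1 H2]. split; [auto| split; auto].
    assert (Rabs (f2 t - f2 s0) < eta) by (apply Hc'; eapply Rlt_le_trans; [exact Ht| apply Rmin_r]).
    apply Rabs_def2 in H0. lra. }
  assert (E1 := HT' h Hh). assert (E2 := HT' (-h) ltac:(rewrite Rabs_Ropp; auto)).
  replace (s0 + - h) with (s0 - h) in E2 by ring. lra.
Qed.

Lemma max_slice2 (f f1 f2 psi : R -> R) (s0 d K : R) :
  0 < d ->
  (forall t, Rabs (t - s0) < d -> is_derive f t (f1 t) /\ is_derive f1 t (f2 t)) ->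
  cont_at f2 s0 ->
  (forall h, Rabs h < d -> f (s0 + h) - f s0 <= psi (s0 + h) - psi s0) ->
  (forall eta, 0 < eta -> exists del, 0 < del /\ forall h, Rabs h < del ->
     psi (s0 + h) + psi (s0 - h) - 2 * psi s0 <= (K + eta) * h^2) ->
  f2 s0 <= K.
Proof.
  intros Hd Hder Hc Hmax Hpsi.
  destruct (Rle_or_lt (f2 s0) K) as [|Hlt]; auto. exfalso.
  destruct (Hpsi ((f2 s0 - K)/3) ltac:(lra)) as [d1 [Hd1 Hp]].
  assert (Hm : 0 < Rmin d d1) by (apply Rmin_pos; auto).
  assert (f2 s0 <= K + (f2 s0 - K)/3).
  { apply (max_slice f f1 f2 psi s0 (Rmin d d1)); auto.
    - intros t Ht; apply Hder. eapply Rlt_le_trans; [exact Ht| apply Rmin_l].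
    - intros h Hh; apply Hmax. eapply Rlt_le_trans; [exact Hh| apply Rmin_l].
    - intros h Hh; apply Hp. eapply Rlt_le_trans; [exact Hh| apply Rmin_r]. }
  lra.
Qed.


Lemma max2d (u psi : R -> R -> R) xs ys d Kx Ky : 0 < d -> d <= xs -> C2_on open_half u ->
  (forall h, Rabs h < d -> u (xs + h) ys - u xs ys <= psi (xs + h) ys - psi xs ys) ->
  (forall h, Rabs h < d -> u xs (ys + h) - u xs ys <= psi xs (ys + h) - psi xs ys) ->
  (forall eta, 0 < eta -> exists del, 0 < del /\ forall h, Rabs h < del ->
     psi (xs + h) ys + psi (xs - h) ys - 2 * psi xs ys <= (Kx + eta) * h^2) ->
  (forall eta, 0 < eta -> exists del, 0 < del /\ forall h, Rabs h < del ->
     psi xs (ys + h) + psi xs (ys - h) - 2 * psi xs ys <= (Ky + eta) * h^2) ->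
  laplacian u xs ys <= Kx + Ky.
Proof.
  intros Hd Hdx HC Hm1 Hm2 Hp1 Hp2.
  assert (Hs : open_half xs ys) by (unfold open_half; lra).
  destruct (HC xs ys Hs) as (_ & _ & _ & _ & _ & _ & _ & _ & _ & C11 & _ & _ & C22).
  unfold laplacian.
  assert (A1 : D1 (D1 u) xs ys <= Kx).
  { apply (max_slice2 (fun t => u t ys) (fun t => D1 u t ys) (fun t => D1 (D1 u) t ys) (fun t => psi t ys) xs d Kx); auto.
    - intros t Ht. assert (Ht' : open_half t ys) by (unfold open_half; apply Rabs_def2 in Ht; lra).
      destruct (HC t ys Ht') as (E1 & _ & E3 & _).
      split; apply Derive_correct; auto.
    - apply cont2e_slice1, cont2_e; auto. }
  assert (A2 : D2 (D2 u) xs ys <= Ky).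
  { apply (max_slice2 (fun t => u xs t) (fun t => D2 u xs t) (fun t => D2 (D2 u) xs t) (fun t => psi xs t) ys d Ky); auto.
    - intros t Ht. 
      destruct (HC xs t Hs) as (_ & E2 & _ & _ & _ & E6 & _).
      split; apply Derive_correct; auto.
    - apply cont2e_slice2, cont2_e; auto. }
  lra.
Qed.


Definition Wf c Z t := 1 - (t - c)^2 - Z^2.
Definition vphi c Z t := ln 8 - 2 * ln (Wf c Z t).
Definition vphi1 c Z t := 4 * (t - c) / Wf c Z t.
Definition vphi2 c Z t := 4 / Wf c Z t + 8 * (t - c)^2 / (Wf c Z t)^2.

Lemma abs_bounds a e d : Rabs e < d -> a * e <= Rabs a * d /\ - (Rabs a * d) <= a * e /\ e^2 <= d^2.
Proof.
  intros H. unfold Rabs in *. repeat destruct Rcase_abs; repeat split; nra.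
Qed.

Lemma vphi_der c Z t : 0 < Wf c Z t ->
  is_derive (vphi c Z) t (vphi1 c Z t) /\ is_derive (vphi1 c Z) t (vphi2 c Z t).
Proof.
  intro H. unfold vphi, vphi1, vphi2, Wf in *. split.
  - auto_derive; [lra| field; lra].
  - auto_derive; [lra| field; lra].
Qed.

Lemma vslice c Z s0 : 0 < Wf c Z s0 ->
  forall eta, 0 < eta -> exists del, 0 < del /\ forall h, Rabs h < del ->
    vphi c Z (s0 + h) + vphi c Z (s0 - h) - 2 * vphi c Z s0 <= (vphi2 c Z s0 + eta) * h^2.
Proof.
  intros HW.
  set (W0 := Wf c Z s0) in *.
  assert (HW1 : W0 <= 1) by (unfold W0, Wf; assert (0 <= (s0 - c)^2) by apply pow2_ge_0; assert (0 <= Z^2) by apply pow2_ge_0; lra).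
  set (d := W0 / 4 / (Rabs (s0 - c) + 1)).
  assert (Ha : 0 <= Rabs (s0 - c)) by apply Rabs_pos.
  assert (Hd : 0 < d) by (unfold d; apply Rdiv_lt_0_compat; lra).
  assert (Hd1 : d * (Rabs (s0 - c) + 1) = W0 / 4) by (unfold d; field; lra).
  assert (Hpos : forall t, Rabs (t - s0) < d -> W0 / 2 < Wf c Z t).
  { intros t Ht. unfold Wf. unfold W0, Wf in Hd1, HW1 |- *.
    replace (1 - (t - c) ^ 2 - Z ^ 2) with ((1 - (s0 - c) ^ 2 - Z ^ 2) - 2 * ((s0 - c) * (t - s0)) - (t - s0)^2) by ring.
    destruct (abs_bounds (s0 - c) (t - s0) d Ht) as (B1 & B2 & B3).
    assert (d <= 1) by (unfold W0, Wf in Hd1; nra).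
    nra. }
  apply (sym_taylor (vphi c Z) (vphi1 c Z) (vphi2 c Z) s0 d Hd).
  - intros t Ht. apply vphi_der. assert (H := Hpos t Ht). lra.
  - apply pt_cont_at. apply (deriv_cont _ (Derive (vphi2 c Z) s0)). apply Derive_correct.
    unfold vphi2, W0, Wf in *. auto_derive. repeat split; intro Hc; nra.
Qed.


Lemma cont2_2d f x y : cont2 f x y -> continuity_2d_pt f x y.
Proof. intro H. apply continuity_2d_pt_filterlim. exact H. Qed.

Lemma cont_Rmax q z : continuity_pt (fun z => Rmax z q) z.
Proof.
  apply cont_at_pt. intros eps He. exists eps; split; auto. intros t Ht.
  unfold Rmax in *. repeat destruct Rle_dec; unfold Rabs in *; repeat destruct Rcase_abs; lra.
Qed.

Lemma cont_W x0 y0 x y : continuity_2d_pt (fun x y => 1 - (x - x0)^2 - (y - y0)^2) x y.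
Proof.
  apply continuity_2d_pt_ext with (f := fun x y => 1 - (x - x0) * (x - x0) - (y - y0) * (y - y0)).
  { intros; simpl; ring. }
  apply continuity_2d_pt_minus; [apply continuity_2d_pt_minus|];
  try apply continuity_2d_pt_const; apply continuity_2d_pt_mult;
  apply continuity_2d_pt_minus; try apply continuity_2d_pt_const;
  try apply continuity_2d_pt_id1; try apply continuity_2d_pt_id2.
Qed.

Lemma cont_V x0 y0 q x y : 0 < q -> continuity_2d_pt (fun x y => ln 8 - 2 * ln (Rmax (1 - (x - x0)^2 - (y - y0)^2) q)) x y.
Proof.
  intro Hq.
  apply (continuity_1d_2d_pt_comp (fun z => ln 8 - 2 * ln (Rmax z q)) (fun x y => 1 - (x - x0)^2 - (y - y0)^2)).
  2: apply cont_W.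
  set (z := 1 - (x - x0) ^ 2 - (y - y0) ^ 2).
  apply (continuity_pt_comp (fun z => Rmax z q) (fun w => ln 8 - 2 * ln w)).
  - apply cont_Rmax.
  - assert (0 < Rmax z q) by (unfold Rmax; destruct Rle_dec; lra).
    apply (deriv_cont _ (Derive (fun w => ln 8 - 2 * ln w) (Rmax z q))). apply Derive_correct.
    auto_derive. auto.
Qed.


Lemma KO (u : R -> R -> R)
 (Hc : forall x y, 0 <= x -> cont2 u x y)
 (HC : C2_on open_half u)
 (Hl : forall x y, 0 < x -> laplacian u x y = F (u x y)) :
 forall x0 y0, 1 <= x0 -> u x0 y0 <= ln 8.
Proof.
  intros x0 y0 Hx0.
  destruct (Rle_or_lt (u x0 y0) (ln 8)) as [|Hu0]; auto. exfalso.
  set (u0 := u x0 y0) in *.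
  destruct (evt2 u (x0 - 1) (x0 + 1) (y0 - 1) (y0 + 1)) as (xm & ym & Hxm & Hym & HM); try lra.
  { intros x y Hx Hy. apply cont2_2d, Hc. lra. }
  set (M := u xm ym) in *.
  set (q1 := exp (- Rabs (M - u0) / 2 - 1)).
  assert (Hq1 : 0 < q1) by apply exp_pos.
  assert (Hq1' : q1 < 1).
  { assert (0 <= Rabs (M - u0)) by apply Rabs_pos.
    assert (exp (- Rabs (M - u0) / 2 - 1) < exp 0) by (apply exp_increasing; lra).
    rewrite exp_0 in H0. exact H0. }
  set (W := fun x y => 1 - (x - x0)^2 - (y - y0)^2).
  set (V := fun x y => ln 8 - 2 * ln (Rmax (W x y) q1)).
  set (g := fun x y => u x y - V x y).
  destruct (evt2 g (x0 - 1) (x0 + 1) (y0 - 1) (y0 + 1)) as (xs & ys & Hxs & Hys & Hg); try lra.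
  { intros x y Hx Hy. apply continuity_2d_pt_minus. apply cont2_2d, Hc. lra. apply cont_V; auto. }
  assert (Hg0 : g x0 y0 = u0 - ln 8).
  { unfold g, V, W. replace (1 - (x0 - x0) ^ 2 - (y0 - y0) ^ 2) with 1 by ring.
    unfold Rmax; destruct Rle_dec; try lra. rewrite ln_1. unfold u0; ring. }
  assert (Hgs : u0 - ln 8 <= g xs ys) by (rewrite <- Hg0; apply Hg; lra).
  set (Ws := W xs ys).
  assert (HWs : q1 < Ws).
  { destruct (Rle_or_lt Ws q1) as [Hle|]; auto. exfalso.
    assert (Hv : V xs ys = ln 8 + Rabs (M - u0) + 2).
    { unfold V. fold Ws. unfold Rmax; destruct Rle_dec; try lra. unfold q1. rewrite ln_exp. field. }
    assert (u xs ys <= M) by (apply HM; auto).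
    unfold g in Hgs. rewrite Hv in Hgs. unfold Rabs in Hgs; destruct Rcase_abs in Hgs; lra. }
  assert (HWs1 : Ws <= 1) by (unfold Ws, W; assert (0 <= (xs - x0)^2) by apply pow2_ge_0; assert (0 <= (ys - y0)^2) by apply pow2_ge_0; lra).
  assert (Hsq : (xs - x0)^2 + (ys - y0)^2 < 1) by (unfold Ws, W in HWs; lra).
  assert (Hax : Rabs (xs - x0) < 1).
  { assert (0 <= (ys - y0)^2) by apply pow2_ge_0. unfold Rabs; destruct Rcase_abs; nra. }
  assert (Hay : Rabs (ys - y0) < 1).
  { assert (0 <= (xs - x0)^2) by apply pow2_ge_0. unfold Rabs; destruct Rcase_abs; nra. }
  assert (Hxs0 : 0 < xs) by (apply Rabs_def2 in Hax; lra).
  set (d := Rmin (Rmin xs 1) ((Ws - q1)/3)).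
  assert (Hd : 0 < d) by (unfold d; repeat apply Rmin_pos; lra).
  assert (Hdx : d <= xs) by (unfold d; eapply Rle_trans; [apply Rmin_l| apply Rmin_l]).
  assert (Hd1 : d <= 1) by (unfold d; eapply Rle_trans; [apply Rmin_l| apply Rmin_r]).
  assert (Hd3 : d <= (Ws - q1)/3) by (unfold d; apply Rmin_r).
  set (psi := fun x y => ln 8 - 2 * ln (W x y)).
  assert (HV : forall x y, q1 < W x y -> V x y = psi x y).
  { intros x y Hw. unfold V, psi. unfold Rmax; destruct Rle_dec; auto; lra. }
  assert (HWx : forall h, Rabs h < d -> q1 < W (xs + h) ys).
  { intros h Hh. destruct (abs_bounds (xs - x0) h d Hh) as (B1 & B2 & B3).
    unfold W. unfold Ws, W in Hd3.
    replace (1 - (xs + h - x0) ^ 2 - (ys - y0) ^ 2) with ((1 - (xs - x0) ^ 2 - (ys - y0) ^ 2) - 2 * ((xs - x0) * h) - h^2) by ring.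
    assert (Rabs (xs - x0) * d < d) by nra. nra. }
  assert (HWy : forall h, Rabs h < d -> q1 < W xs (ys + h)).
  { intros h Hh. destruct (abs_bounds (ys - y0) h d Hh) as (B1 & B2 & B3).
    unfold W. unfold Ws, W in Hd3.
    replace (1 - (xs - x0) ^ 2 - (ys + h - y0) ^ 2) with ((1 - (xs - x0) ^ 2 - (ys - y0) ^ 2) - 2 * ((ys - y0) * h) - h^2) by ring.
    assert (Rabs (ys - y0) * d < d) by nra. nra. }
  assert (HinQ : forall x y, q1 < W x y -> x0 - 1 <= x <= x0 + 1 /\ y0 - 1 <= y <= y0 + 1).
  { intros x y Hw. unfold W in Hw. assert (0 <= (x - x0)^2) by apply pow2_ge_0.
    assert (0 <= (y - y0)^2) by apply pow2_ge_0. split; split; nra. }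
  assert (Hlap : laplacian u xs ys <= vphi2 x0 (ys - y0) xs + vphi2 y0 (xs - x0) ys).
  { apply (max2d u psi xs ys d); auto.
    - intros h Hh. assert (Hw := HWx h Hh). destruct (HinQ _ _ Hw) as [Q1 Q2].
      assert (g (xs + h) ys <= g xs ys) by (apply Hg; auto).
      unfold g in H. rewrite (HV _ _ Hw) in H. rewrite (HV _ _ HWs) in H. lra.
    - intros h Hh. assert (Hw := HWy h Hh). destruct (HinQ _ _ Hw) as [Q1 Q2].
      assert (g xs (ys + h) <= g xs ys) by (apply Hg; auto).
      unfold g in H. rewrite (HV _ _ Hw) in H. rewrite (HV _ _ HWs) in H. lra.
    - intros eta He. destruct (vslice x0 (ys - y0) xs ltac:(unfold Wf; unfold Ws, W in HWs; lra) eta He) as [del [Hdel Hv]].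
      exists del; split; auto.
    - intros eta He. destruct (vslice y0 (xs - x0) ys ltac:(unfold Wf; unfold Ws, W in HWs; lra) eta He) as [del [Hdel Hv]].
      exists del; split; auto. intros h Hh. assert (Hv' := Hv h Hh).
      assert (Heq : forall t, psi xs t = vphi y0 (xs - x0) t) by (intro t; unfold psi, vphi, W, Wf; do 3 f_equal; ring).
      rewrite !Heq. exact Hv'. }
  assert (HKsum : vphi2 x0 (ys - y0) xs + vphi2 y0 (xs - x0) ys = 8 / Ws^2).
  { unfold vphi2, Wf. unfold Ws, W in *. replace (1 - (ys - y0) ^ 2 - (xs - x0) ^ 2) with (1 - (xs - x0) ^ 2 - (ys - y0) ^ 2) by ring.
    field. lra. }
  rewrite HKsum, (Hl xs ys Hxs0) in Hlap.
  set (Vs := V xs ys).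
  assert (HVs : Vs = ln 8 - 2 * ln Ws) by (unfold Vs; rewrite (HV _ _ HWs); reflexivity).
  set (E := exp Vs).
  assert (HE : E * Ws^2 = 8).
  { unfold E. rewrite HVs. unfold Rminus. rewrite exp_plus, exp_ln by lra.
    replace (- (2 * ln Ws)) with (- (ln Ws + ln Ws)) by ring. rewrite exp_Ropp, exp_plus, exp_ln by lra. field. lra. }
  assert (HE8 : 8 <= E).
  { assert (0 < E) by apply exp_pos. assert (Hw2 : 0 < Ws^2 <= 1) by (split; nra).
    assert (0 <= E * (1 - Ws^2)) by (apply Rmult_le_pos; lra). nra. }
  assert (HVs0 : 0 <= Vs).
  { rewrite HVs. assert (ln Ws <= 0).
    { destruct (Rle_lt_or_eq_dec _ _ HWs1) as [Hlt|Heq]; [left; rewrite <- ln_1; apply ln_increasing; lra| rewrite Heq, ln_1; lra]. }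
    assert (0 < ln 8) by (rewrite <- ln_1; apply ln_increasing; lra). lra. }
  assert (HF := F_incr Vs (g xs ys) HVs0 ltac:(lra)).
  replace (Vs + g xs ys) with (u xs ys) in HF by (unfold g, Vs; ring).
  assert (HFV : F Vs = 2 * E - 2 / (E * E)).
  { unfold F, E. replace (-2 * Vs) with (- (Vs + Vs)) by ring. rewrite exp_Ropp, exp_plus. field. 
    assert (0 < exp Vs) by apply exp_pos. lra. }
  assert (Hw2 : 0 < Ws^2) by nra.
  assert (8 / Ws^2 = E) by (rewrite <- HE; field; lra).
  assert (2 / (E * E) < E).
  { assert (0 < E * E) by nra. apply (Rmult_lt_reg_r (E * E)); auto.
    replace (2 / (E * E) * (E * E)) with 2 by (field; lra). nra. }
  lra.
Qed.


Definition dseg (b c y : R) := Rmax 0 (Rmax (y - b) (c - y)).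
Definition rho (b c x y : R) := sqrt (x^2 + (dseg b c y)^2).

Lemma s3sq : sqrt 3 * sqrt 3 = 3.
Proof. apply sqrt_sqrt; lra. Qed.
Lemma s3pos : 1.7 < sqrt 3.
Proof. assert (0 <= sqrt 3) by apply sqrt_pos. pose proof s3sq. nra. Qed.

Lemma dseg_nonneg b c y : 0 <= dseg b c y.
Proof. unfold dseg, Rmax; repeat destruct Rle_dec; lra. Qed.

Lemma dseg_cases b c y : c <= b -> 0 < dseg b c y ->
  (dseg b c y = y - b /\ b <= y) \/ (dseg b c y = c - y /\ y <= c).
Proof. intros. unfold dseg, Rmax in *; repeat destruct Rle_dec; try lra; try (left; lra); right; lra. Qed.

Lemma dseg_top b c y : c <= b -> b <= y -> dseg b c y = y - b.
Proof. intros. unfold dseg, Rmax; repeat destruct Rle_dec; lra. Qed.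
Lemma dseg_bot b c y : c <= b -> y <= c -> dseg b c y = c - y.
Proof. intros. unfold dseg, Rmax; repeat destruct Rle_dec; lra. Qed.

Lemma pred_mod n i : (1 <= n)%nat -> (i < n)%nat -> exists i', (i' < n)%nat /\ Nat.modulo (S i') n = i.
Proof.
  intros Hn Hi. destruct i as [|i].
  - exists (n - 1)%nat. split; [lia|]. replace (S (n - 1)) with n by lia. apply Nat.Div0.mod_same.
  - exists i. split; [lia|]. apply Nat.mod_small. lia.
Qed.

Lemma glue_move (n : nat) (a b : nat -> R) (u : nat -> R -> R -> R)
  (hn : (1 <= n)%nat) (ha : forall i, (i < n)%nat -> 0 < a i)
  (hglue : forall i, (i < n)%nat -> forall x y,
            let j := Nat.modulo (S i) n in
            in_B (b j - a j) x y ->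
            u j x y = u i (glue_x (b j - a j) (b i) x y) (glue_y (b j - a j) (b i) x y)) :
  forall i, (i < n)%nat -> forall x y, 0 <= x -> 0 < dseg (b i) (b i - a i) y ->
    x <= sqrt 3 * dseg (b i) (b i - a i) y ->
    exists k x' y', (k < n)%nat /\ x' = (sqrt 3 * dseg (b i) (b i - a i) y - x) / 2 /\
      u k x' y' = u i x y /\ rho (b k) (b k - a k) x' y' = rho (b i) (b i - a i) x y.
Proof.
  intros i Hi x y Hx Hd Hxd.
  assert (S3 := s3sq). assert (S3p := s3pos).
  assert (Hai := ha i Hi).
  destruct (dseg_cases (b i) (b i - a i) y ltac:(lra) Hd) as [[Hdy Hy]|[Hdy Hy]].
  -
    set (j := Nat.modulo (S i) n).
    assert (Hj : (j < n)%nat) by (apply Nat.mod_upper_bound; lia).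
    assert (Haj := ha j Hj).
    set (cj := b j - a j).
    set (X := x). set (Y := y - b i).
    set (px := - X / 2 + sqrt 3 * Y / 2).
    set (py := cj - sqrt 3 * X / 2 - Y / 2).
    assert (HB : in_B cj px py).
    { unfold in_B, px, py. rewrite Hdy in Hxd. unfold X, Y. split; nra. }
    assert (Hg := hglue i Hi px py HB). simpl in Hg. fold j in Hg. fold cj in Hg.
    assert (E1 : sqrt 3 * sqrt 3 * X = 3 * X) by (rewrite S3; ring).
    assert (E2 : sqrt 3 * sqrt 3 * Y = 3 * Y) by (rewrite S3; ring).
    assert (Hgx : glue_x cj (b i) px py = x) by (unfold glue_x, px, py; unfold X, Y in *; lra).
    assert (Hgy : glue_y cj (b i) px py = y) by (unfold glue_y, px, py; unfold X, Y in *; lra).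
    rewrite Hgx, Hgy in Hg.
    exists j, px, py. split; auto. split; [unfold px, X, Y; rewrite Hdy; field|]. split; auto.
    assert (Hpy : py <= cj).
    { unfold py. assert (0 <= sqrt 3 * X) by (apply Rmult_le_pos; unfold X; lra). unfold Y. lra. }
    unfold rho. rewrite Hdy. fold cj. rewrite (dseg_bot (b j) cj py); [| unfold cj; lra| exact Hpy].
    f_equal. fold cj. unfold py, px, X, Y. nra.
  -
    destruct (pred_mod n i hn Hi) as [i' [Hi' Hmod]].
    assert (Hai' := ha i' Hi').
    set (c := b i - a i) in *.
    assert (HB : in_B (b i - a i) x y).
    { unfold in_B. unfold c in *. rewrite Hdy in Hxd. split; [lra|]. rewrite Rmult_minus_distr_l in *. idtac.
 set (s := sqrt 3) in *. set (bb := b i - a i) in *. lra. }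
    assert (Hg := hglue i' Hi' x y). simpl in Hg. rewrite Hmod in Hg. specialize (Hg HB).
    exists i', (glue_x c (b i') x y), (glue_y c (b i') x y). split; auto.
    split; [unfold glue_x; rewrite Hdy; field|]. split; [symmetry; exact Hg|].
    unfold rho. rewrite Hdy. rewrite dseg_top; [| lra| unfold glue_y; unfold c in *; nra].
    f_equal. unfold glue_x, glue_y. nra.
Qed.


Lemma rho_sq b c x y : (rho b c x y)^2 = x^2 + (dseg b c y)^2.
Proof. unfold rho. apply pow2_sqrt. assert (0 <= x^2) by apply pow2_ge_0. assert (0 <= (dseg b c y)^2) by apply pow2_ge_0. lra. Qed.
Lemma rho_nonneg b c x y : 0 <= rho b c x y.
Proof. apply sqrt_pos. Qed.
Lemma rho_ge_x b c x y : 0 <= x -> x <= rho b c x y.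
Proof. intro. assert (H1 := rho_sq b c x y). assert (H2 := rho_nonneg b c x y).
  assert (0 <= (dseg b c y)^2) by apply pow2_ge_0. nra. Qed.
Lemma rho_ge_d b c x y : dseg b c y <= rho b c x y.
Proof. assert (H1 := rho_sq b c x y). assert (H2 := rho_nonneg b c x y). assert (H3 := dseg_nonneg b c y).
  assert (0 <= x^2) by apply pow2_ge_0. nra. Qed.

Lemma far_bound (n : nat) (a b : nat -> R) (u : nat -> R -> R -> R)
  (hn : (1 <= n)%nat) (ha : forall i, (i < n)%nat -> 0 < a i)
  (hcont : forall i, (i < n)%nat -> forall x y, closed_half x y -> cont2 (u i) x y)
  (hC2 : forall i, (i < n)%nat -> C2_on open_half (u i))
  (hPDE : forall i, (i < n)%nat -> forall x y, open_half x y ->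
            gauss_curv (u i) x y = -1 + phi_norm2 (u i) x y)
  (hglue : forall i, (i < n)%nat -> forall x y,
            let j := Nat.modulo (S i) n in
            in_B (b j - a j) x y ->
            u j x y = u i (glue_x (b j - a j) (b i) x y) (glue_y (b j - a j) (b i) x y)) :
  forall i, (i < n)%nat -> forall x y, 0 <= x -> 9 <= rho (b i) (b i - a i) x y -> u i x y <= ln 8.
Proof.
  assert (KOk : forall k, (k < n)%nat -> forall x y, 1 <= x -> u k x y <= ln 8).
  { intros k Hk. apply KO.
    - intros x y Hx. apply hcont; auto.
    - apply hC2; auto.
    - intros x y Hx. apply lap_F. apply hPDE; auto. }
  intros i Hi x y Hx Hr.
  destruct (Rle_or_lt 1 x) as [H1|H1]; [apply KOk; auto|].
  assert (Hsq := rho_sq (b i) (b i - a i) x y).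
  assert (Hd0 := dseg_nonneg (b i) (b i - a i) y).
  set (d := dseg (b i) (b i - a i) y) in *.
  assert (Hd8 : 8 <= d) by nra.
  assert (S3p := s3pos).
  assert (Hsd : 1.7 * 8 <= sqrt 3 * d) by (apply Rmult_le_compat; lra).
  destruct (glue_move n a b u hn ha hglue i Hi x y Hx ltac:(fold d; lra) ltac:(fold d; lra)) as (k & x' & y' & Hk & Hx' & Hu & _).
  rewrite <- Hu. apply KOk; auto. fold d in Hx'. rewrite Hx'. lra.
Qed.


Definition Rten : R := 10.
Definition Ef (s : R) := exp (- sqrt 6 * (s - Rten)).
Definition Phi (s : R) := 12 * Ef s / (1 + Ef s)^2.
Definition Phi1 (s : R) := - 12 * sqrt 6 * Ef s * (1 - Ef s) / (1 + Ef s)^3.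
Definition Phi2 (s : R) := 72 * Ef s * (1 - 4 * Ef s + (Ef s)^2) / (1 + Ef s)^4.

Lemma s6sq : sqrt 6 * sqrt 6 = 6.
Proof. apply sqrt_sqrt; lra. Qed.
Lemma s6pos : 0 < sqrt 6.
Proof. apply sqrt_lt_R0; lra. Qed.

Lemma Ef_pos s : 0 < Ef s.
Proof. apply exp_pos. Qed.
Lemma Ef_le1 s : Rten <= s -> Ef s <= 1.
Proof. intro H. unfold Ef. rewrite <- exp_0. apply exp_le_exp. assert (S := s6pos). nra. Qed.
Lemma Ef_R0 : Ef Rten = 1.
Proof. unfold Ef. replace (- sqrt 6 * (Rten - Rten)) with 0 by ring. apply exp_0. Qed.

Lemma Phi_der s : is_derive Phi s (Phi1 s) /\ is_derive Phi1 s (Phi2 s).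
Proof.
  assert (HE := Ef_pos s). assert (S6 := s6sq).
  unfold Phi, Phi1, Phi2 in *. unfold Ef. split.
  - auto_derive; change (s + - Rten) with (s - Rten); fold (Ef s); set (e := Ef s) in *; set (k := sqrt 6) in *.
    + intro H. nra.
    + field. intro H. nra.
  - auto_derive; change (s + - Rten) with (s - Rten); fold (Ef s); set (e := Ef s) in *; set (k := sqrt 6) in *.
    + intro H. nra.
    + assert (Hk : k^2 = 6) by (simpl; rewrite Rmult_1_r; exact S6).
      field_simplify; [| intro H; nra..]. rewrite Hk. field. nra.
Qed.

Lemma Phi_nonneg s : 0 <= Phi s.
Proof. assert (HE := Ef_pos s). unfold Phi. apply Rmult_le_pos; [lra|]. left; apply Rinv_0_lt_compat. nra. Qed.
Lemma Phi_le3 s : Phi s <= 3.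
Proof. assert (HE := Ef_pos s). unfold Phi. set (e := Ef s) in *.
  apply (Rmult_le_reg_r ((1 + e)^2)); [nra|]. unfold Rdiv. rewrite Rmult_assoc, Rinv_l; [|nra]. assert (0 <= (1 - e)^2) by apply pow2_ge_0. nra. Qed.
Lemma Phi_R0 : Phi Rten = 3.
Proof. unfold Phi. rewrite Ef_R0. field. Qed.
Lemma Phi1_nonpos s : Rten <= s -> Phi1 s <= 0.
Proof. intro H. assert (HE := Ef_pos s). assert (HE1 := Ef_le1 s H). assert (S := s6pos). unfold Phi1.
  set (e := Ef s) in *. set (k := sqrt 6) in *. unfold Rdiv.
  assert (0 < / (1 + e)^3) by (apply Rinv_0_lt_compat; nra).
  assert (0 <= 12 * k * e * (1 - e)) by (repeat apply Rmult_le_pos; lra).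
  nra. Qed.
Lemma Phi2_eq s : Phi2 s = 6 * Phi s - 3 * (Phi s)^2.
Proof. assert (HE := Ef_pos s). unfold Phi2, Phi. field. nra. Qed.
Lemma Phi_le_E s : Phi s <= 12 * Ef s.
Proof. assert (HE := Ef_pos s). unfold Phi. set (e := Ef s) in *.
  apply (Rmult_le_reg_r ((1 + e)^2)); [nra|]. unfold Rdiv. rewrite Rmult_assoc, Rinv_l; [|nra]. nra. Qed.
Lemma Phi2_cont s : cont_at Phi2 s.
Proof.
  apply pt_cont_at. apply (deriv_cont _ (Derive Phi2 s)). apply Derive_correct.
  assert (HE := Ef_pos s). unfold Phi2, Ef in *. auto_derive. change (s + - Rten) with (s - Rten). nra.
Qed.

Definition Theta (ep s : R) := Phi s + ep * exp s.
Definition Theta1 (ep s : R) := Phi1 s + ep * exp s.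
Definition Theta2 (ep s : R) := Phi2 s + ep * exp s.

Lemma Theta_der ep s : is_derive (Theta ep) s (Theta1 ep s) /\ is_derive (Theta1 ep) s (Theta2 ep s).
Proof.
  destruct (Phi_der s) as [H1 H2]. unfold Theta, Theta1, Theta2. split.
  - apply (is_derive_plus _ _ _ _ _ H1). auto_derive; [exact I| ring].
  - apply (is_derive_plus _ _ _ _ _ H2). auto_derive; [exact I| ring].
Qed.

Lemma Theta2_cont ep s : cont_at (Theta2 ep) s.
Proof.
  intros eta He. destruct (Phi2_cont s (eta/2) ltac:(lra)) as [d1 [Hd1 H1]].
  assert (Hc : cont_at (fun t => ep * exp t) s).
  { apply pt_cont_at. apply (deriv_cont _ (ep * exp s)). auto_derive; [exact I| ring]. }
  destruct (Hc (eta/2) ltac:(lra)) as [d2 [Hd2 H2]].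
  exists (Rmin d1 d2). split; [apply Rmin_pos; auto|]. intros t Ht.
  assert (A1 := H1 t ltac:(eapply Rlt_le_trans; [exact Ht| apply Rmin_l])).
  assert (A2 := H2 t ltac:(eapply Rlt_le_trans; [exact Ht| apply Rmin_r])).
  unfold Theta2. simpl in A2.
  replace (Phi2 t + ep * exp t - (Phi2 s + ep * exp s)) with ((Phi2 t - Phi2 s) + (ep * exp t - ep * exp s)) by ring.
  eapply Rle_lt_trans; [apply Rabs_triang|]. lra.
Qed.


Lemma abs_le x a : Rabs x <= a -> - a <= x <= a.
Proof. unfold Rabs; destruct Rcase_abs; intros; lra. Qed.

Lemma SL (T T1 T2 : R -> R) rho0 beta (r : R -> R) dr :
  0 < rho0 -> beta^2 <= 1 -> 0 < dr ->
  (forall s, is_derive T s (T1 s) /\ is_derive T1 s (T2 s)) -> cont_at T2 rho0 ->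
  (forall h, Rabs h < dr -> rho0 + beta * h <= r h /\ r h <= rho0 + beta * h + h^2 / (2 * rho0)) ->
  forall eta, 0 < eta -> exists del, 0 < del /\ forall h, Rabs h < del ->
    T (r h) + T (r (-h)) - 2 * T rho0 <= (Rmax (T1 rho0) 0 / rho0 + Rmax (T2 rho0) 0 * beta^2 + eta) * h^2.
Proof.
  intros Hr0 Hb Hdr Hder Hc Hr eta He.
  set (A := Rmax (T2 rho0) 0 + eta / 2).
  assert (HA : eta / 2 <= A) by (unfold A; assert (0 <= Rmax (T2 rho0) 0) by apply Rmax_r; lra).
  assert (HA0 : 0 < A) by lra.
  destruct (Hc (eta/2) ltac:(lra)) as [d1 [Hd1 Hc1]].
  assert (HT := taylor_up T T1 T2 rho0 d1 A Hd1).
  assert (HT' : forall t, Rabs t < d1 -> T (rho0 + t) <= T rho0 + T1 rho0 * t + A * t ^ 2 / 2).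
  { apply HT. intros t Ht. destruct (Hder t) as [H1 H2]. split; [auto| split; auto].
    assert (Hx := Hc1 t Ht). apply Rabs_def2 in Hx. unfold A. assert (T2 rho0 <= Rmax (T2 rho0) 0) by apply Rmax_l. lra. }
  set (del := Rmin dr (Rmin 1 (Rmin (d1 / 2) (Rmin rho0 (eta * rho0 / (4 * A)))))).
  assert (Hdel : 0 < del).
  { unfold del. repeat apply Rmin_pos; try lra. apply Rdiv_lt_0_compat; nra. }
  exists del. split; auto. intros h Hh.
  assert (Hh1 : Rabs h < dr) by (eapply Rlt_le_trans; [exact Hh| apply Rmin_l]).
  assert (Hh2 : Rabs h <= d1 / 2).
  { left. eapply Rlt_le_trans; [exact Hh|]. unfold del. eapply Rle_trans; [apply Rmin_r|].
    eapply Rle_trans; [apply Rmin_r|]. apply Rmin_l. }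
  assert (Hh3 : Rabs h <= rho0).
  { left. eapply Rlt_le_trans; [exact Hh|]. unfold del. eapply Rle_trans; [apply Rmin_r|].
    eapply Rle_trans; [apply Rmin_r|]. eapply Rle_trans; [apply Rmin_r|]. apply Rmin_l. }
  assert (Hh4 : Rabs h <= eta * rho0 / (4 * A)).
  { left. eapply Rlt_le_trans; [exact Hh|]. unfold del. eapply Rle_trans; [apply Rmin_r|].
    eapply Rle_trans; [apply Rmin_r|]. eapply Rle_trans; [apply Rmin_r|]. apply Rmin_r. }
  assert (Hh1' : Rabs (-h) < dr) by (rewrite Rabs_Ropp; auto).
  set (a := Rabs h).
  assert (Ha0 : 0 <= a) by apply Rabs_pos.
  assert (Hsq : h^2 = a^2) by (unfold a; rewrite pow2_abs; ring).
  assert (Hah : Rabs h = a) by reflexivity. clearbody a.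
  destruct (Hr h Hh1) as [L1 U1]. destruct (Hr (-h) Hh1') as [L2 U2].
  set (ep := r h - rho0 - beta * h). set (em := r (-h) - rho0 + beta * h).
  assert (Hep : r h = rho0 + beta * h + ep) by (unfold ep; ring).
  assert (Hem : r (-h) = rho0 - beta * h + em) by (unfold em; ring).
  clearbody ep em.
  assert (He1 : 0 <= ep <= a^2 / (2 * rho0)) by (rewrite <- Hsq; lra).
  assert (He2 : 0 <= em <= a^2 / (2 * rho0)) by (replace ((-h)^2) with (h^2) in U2 by ring; rewrite <- Hsq; lra).
  assert (Hea : a^2 / (2 * rho0) <= a / 2).
  { replace (a / 2) with ((a * rho0) / (2 * rho0)) by (field; lra). unfold Rdiv. apply Rmult_le_compat_r; [left; apply Rinv_0_lt_compat; lra| ]. assert (a * a <= a * rho0) by (apply Rmult_le_compat_l; lra). simpl; lra. }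
  assert (Hb1 : Rabs beta <= 1).
  { unfold Rabs; destruct Rcase_abs; nra. }
  assert (Hbh : Rabs (beta * h) <= a) by (rewrite Rabs_mult; rewrite Hah; assert (0 <= Rabs beta) by apply Rabs_pos; nra).
  assert (Hbh' := abs_le _ _ Hbh).
  assert (Htp : Rabs (r h - rho0) < d1).
  { replace (r h - rho0) with (beta * h + ep) by (rewrite Hep; ring). apply Rabs_def1; lra. }
  assert (Htm : Rabs (r (-h) - rho0) < d1).
  { replace (r (-h) - rho0) with (- (beta * h) + em) by (rewrite Hem; ring). apply Rabs_def1; lra. }
  assert (T1e := HT' _ Htp). assert (T2e := HT' _ Htm).
  replace (rho0 + (r h - rho0)) with (r h) in T1e by ring.
  replace (rho0 + (r (-h) - rho0)) with (r (-h)) in T2e by ring.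
  replace (r h - rho0) with (beta * h + ep) in T1e by (rewrite Hep; ring).
  replace (r (-h) - rho0) with (- (beta * h) + em) in T2e by (rewrite Hem; ring).
  assert (P1 : T1 rho0 * (ep + em) <= Rmax (T1 rho0) 0 / rho0 * h^2).
  { assert (T1 rho0 <= Rmax (T1 rho0) 0) by apply Rmax_l. assert (0 <= Rmax (T1 rho0) 0) by apply Rmax_r.
    assert (a^2 / (2 * rho0) + a^2 / (2 * rho0) = a^2 / rho0) by (field; lra).
    assert (ep + em <= a^2 / rho0) by lra.
    rewrite Hsq. unfold Rdiv in *. nra. }
  assert (P2 : (beta * h + ep)^2 + (- (beta * h) + em)^2 <= 2 * beta^2 * h^2 + 3 * a * (a^2 / (2 * rho0))).
  { assert (Q1 : (beta * h) * ep <= a * ep) by nra. assert (Q2 : - (beta * h) * em <= a * em) by nra.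
    assert (ep * ep <= (a/2) * ep) by nra. assert (em * em <= (a/2) * em) by nra.
    assert (a * ep <= a * (a^2 / (2 * rho0))) by nra. assert (a * em <= a * (a^2 / (2 * rho0))) by nra.
    nra. }
  assert (P3 : A * (3 * a * (a^2 / (2 * rho0))) / 2 <= eta / 2 * h^2).
  { rewrite Hsq. assert (Hk : A * a <= eta * rho0 / 4).
    { apply (Rmult_le_reg_r (/ A)). apply Rinv_0_lt_compat; lra.
      replace (A * a * / A) with a by (field; lra). unfold Rdiv in Hh4. rewrite Rinv_mult in Hh4.
      rewrite Hah in Hh4. replace (eta * rho0 / 4 * / A) with (eta * rho0 * (/ 4 * / A)) by (field; lra). lra. }
    unfold Rdiv. replace (A * (3 * a * (a ^ 2 * / (2 * rho0))) * / 2) with ((A * a) * a^2 * (3 / (4 * rho0))) by (field; lra).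
    assert (0 <= a^2) by apply pow2_ge_0.
    assert (0 < 3 / (4 * rho0)) by (apply Rdiv_lt_0_compat; lra).
    apply Rle_trans with (eta * rho0 / 4 * a^2 * (3 / (4 * rho0))).
    { apply Rmult_le_compat_r; [lra|]. apply Rmult_le_compat_r; lra. }
    replace (eta * rho0 / 4 * a ^ 2 * (3 / (4 * rho0))) with (3/16 * eta * a^2) by (field; lra). nra. }
  assert (P4 : A * beta^2 <= Rmax (T2 rho0) 0 * beta^2 + eta / 2).
  { unfold A. assert (0 <= beta^2) by apply pow2_ge_0. nra. }
  assert (0 <= h^2) by apply pow2_ge_0.
  assert (A * (2 * beta ^ 2 * h ^ 2 + 3 * a * (a ^ 2 / (2 * rho0))) / 2 <= (Rmax (T2 rho0) 0 * beta^2 + eta/2) * h^2 + eta / 2 * h^2).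
  { assert (A * (2 * beta ^ 2 * h ^ 2) / 2 = (A * beta^2) * h^2) by field. nra. }
  assert (A * ((beta * h + ep)^2 + (- (beta * h) + em)^2) / 2 <= A * (2 * beta ^ 2 * h ^ 2 + 3 * a * (a ^ 2 / (2 * rho0))) / 2) by nra.
  nra.
Qed.


Lemma rslice_gen rho0 gam rh h : 0 < rho0 -> gam^2 <= rho0^2 -> 0 <= rh ->
  rho0^2 + gam * h <= rh * rho0 -> rh^2 <= rho0^2 + 2 * gam * h + h^2 ->
  rho0 + gam / rho0 * h <= rh /\ rh <= rho0 + gam / rho0 * h + h^2 / (2 * rho0).
Proof.
  intros Hr Hg Hrh H1 H2. split.
  - apply (Rmult_le_reg_r rho0); auto.
    replace ((rho0 + gam / rho0 * h) * rho0) with (rho0^2 + gam * h) by (field; lra). lra.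
  - set (R := rho0 + gam / rho0 * h + h ^ 2 / (2 * rho0)).
    assert (HR : R * (2 * rho0) = rho0^2 + (rho0^2 + 2 * gam * h + h^2)) by (unfold R; field; lra).
    assert (Hgh : Rabs (gam * h) <= rho0 * Rabs h).
    { rewrite Rabs_mult. apply Rmult_le_compat_r; [apply Rabs_pos|].
      assert (Rabs gam ^ 2 <= rho0 ^2) by (rewrite pow2_abs; auto).
      assert (0 <= Rabs gam) by apply Rabs_pos. nra. }
    assert (Hh2 : h^2 = Rabs h ^ 2) by (rewrite pow2_abs; auto).
    assert (0 <= Rabs h) by apply Rabs_pos.
    assert (Hq : 0 <= rho0^2 + 2 * gam * h + h^2).
    { apply abs_le in Hgh. nra. }
    assert (HR0 : 0 <= R) by (apply (Rmult_le_reg_r (2 * rho0)); [lra|]; rewrite HR; nra).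
    assert (R^2 = rho0^2 + 2 * gam * h + h^2 + (gam / rho0 * h + h ^ 2 / (2 * rho0))^2) by (unfold R; field; lra).
    assert (0 <= (gam / rho0 * h + h ^ 2 / (2 * rho0))^2) by apply pow2_ge_0.
    nra.
Qed.

Lemma dseg_lip b c y y' : Rabs (dseg b c y' - dseg b c y) <= Rabs (y' - y).
Proof. unfold dseg, Rmax. repeat destruct Rle_dec; unfold Rabs; repeat destruct Rcase_abs; lra. Qed.

Lemma dseg_facts b c y : c <= b -> y - b <= dseg b c y /\ c - y <= dseg b c y /\
  (dseg b c y)^2 <= (y - b)^2 /\ (dseg b c y)^2 <= (y - c)^2.
Proof. intro. unfold dseg, Rmax. repeat destruct Rle_dec; repeat split; nra. Qed.

Lemma dseg_sub b c y0 : c <= b -> exists gam, gam^2 <= (dseg b c y0)^2 /\ forall h,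
  (dseg b c y0)^2 + gam * h <= dseg b c (y0 + h) * dseg b c y0 /\
  (dseg b c (y0 + h))^2 <= (dseg b c y0)^2 + 2 * gam * h + h^2.
Proof.
  intro Hcb.
  destruct (Rlt_le_dec b y0) as [Ht|Ht].
  - rewrite (dseg_top b c y0 Hcb ltac:(lra)). exists (y0 - b). split; [lra|]. intro h.
    destruct (dseg_facts b c (y0 + h) Hcb) as (F1 & F2 & F3 & F4). split; nra.
  - destruct (Rlt_le_dec y0 c) as [Hb|Hb].
    + rewrite (dseg_bot b c y0 Hcb ltac:(lra)). exists (- (c - y0)). split; [nra|]. intro h.
      destruct (dseg_facts b c (y0 + h) Hcb) as (F1 & F2 & F3 & F4). split; nra.
    + assert (H0 : dseg b c y0 = 0) by (unfold dseg, Rmax; repeat destruct Rle_dec; lra).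
      rewrite H0. exists 0. split; [nra|]. intro h.
      assert (L := dseg_lip b c y0 (y0 + h)). rewrite H0 in L.
      replace (y0 + h - y0) with h in L by ring. rewrite Rminus_0_r in L.
      assert (0 <= dseg b c (y0 + h)) by apply dseg_nonneg.
      rewrite Rabs_pos_eq in L by auto.
      assert (Rabs h ^ 2 = h^2) by apply pow2_abs.
      assert (0 <= Rabs h) by apply Rabs_pos.
      split; nra.
Qed.



Lemma cauchy2 a b c d : a * c + b * d <= sqrt (a^2 + b^2) * sqrt (c^2 + d^2).
Proof. pose proof (sqrt_cauchy a b c d). unfold Rsqr in H. simpl. rewrite !Rmult_1_r. exact H. Qed.

Lemma rho_xslice b c x0 y0 : 0 < rho b c x0 y0 -> forall h,
  rho b c x0 y0 + x0 / rho b c x0 y0 * h <= rho b c (x0 + h) y0 /\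
  rho b c (x0 + h) y0 <= rho b c x0 y0 + x0 / rho b c x0 y0 * h + h^2 / (2 * rho b c x0 y0).
Proof.
  intros Hr h. apply rslice_gen; auto.
  - rewrite rho_sq. assert (0 <= (dseg b c y0)^2) by apply pow2_ge_0. lra.
  - apply rho_nonneg.
  - rewrite rho_sq. unfold rho at 1 2. pose proof (cauchy2 (x0 + h) (dseg b c y0) x0 (dseg b c y0)). nra.
  - rewrite !rho_sq. nra.
Qed.

Lemma rho_yslice b c x0 y0 : c <= b -> 0 < rho b c x0 y0 -> exists gam,
  x0^2 + gam^2 <= (rho b c x0 y0)^2 /\ forall h,
  rho b c x0 y0 + gam / rho b c x0 y0 * h <= rho b c x0 (y0 + h) /\
  rho b c x0 (y0 + h) <= rho b c x0 y0 + gam / rho b c x0 y0 * h + h^2 / (2 * rho b c x0 y0).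
Proof.
  intros Hcb Hr. destruct (dseg_sub b c y0 Hcb) as [gam [Hg Hh]].
  exists gam. split; [rewrite rho_sq; lra|]. intro h. destruct (Hh h) as [H1 H2].
  apply rslice_gen; auto.
  - rewrite rho_sq. assert (0 <= x0^2) by apply pow2_ge_0. lra.
  - apply rho_nonneg.
  - rewrite rho_sq. unfold rho at 1 2. pose proof (cauchy2 x0 (dseg b c (y0 + h)) x0 (dseg b c y0)). nra.
  - rewrite !rho_sq. nra.
Qed.


Lemma lip_cont (f : R -> R) z : (forall z', Rabs (f z' - f z) <= Rabs (z' - z)) -> continuity_pt f z.
Proof.
  intro H. apply cont_at_pt. intros eps He. exists eps; split; auto. intros t Ht.
  eapply Rle_lt_trans; [apply H| exact Ht].
Qed.

Lemma cont_rho b c x y : continuity_2d_pt (rho b c) x y.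
Proof.
  unfold rho.
  apply (continuity_1d_2d_pt_comp sqrt (fun x y => x^2 + (dseg b c y)^2)).
  - apply continuity_pt_sqrt. assert (0 <= x^2) by apply pow2_ge_0. assert (0 <= (dseg b c y)^2) by apply pow2_ge_0. lra.
  - apply continuity_2d_pt_ext with (f := fun x y => x * x + dseg b c y * dseg b c y).
    { intros; simpl; ring. }
    apply continuity_2d_pt_plus; apply continuity_2d_pt_mult.
    1,2: apply continuity_2d_pt_id1.
    1,2: apply (continuity_1d_2d_pt_comp (dseg b c) (fun _ v => v)); [apply lip_cont; intro; apply dseg_lip| apply continuity_2d_pt_id2].
Qed.

Lemma cont_g (u : R -> R -> R) ep b c x y : cont2 u x y ->
  continuity_2d_pt (fun x y => Rmin (u x y) (ln 8) - Theta ep (Rmax (rho b c x y) Rten)) x y.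
Proof.
  intro Hu. apply continuity_2d_pt_minus.
  - apply (continuity_1d_2d_pt_comp (fun z => Rmin z (ln 8)) u); [|apply cont2_2d; auto].
    apply lip_cont. intro z'. unfold Rmin. repeat destruct Rle_dec; unfold Rabs; repeat destruct Rcase_abs; lra.
  - apply (continuity_1d_2d_pt_comp (fun z => Theta ep (Rmax z Rten)) (rho b c)); [|apply cont_rho].
    apply (continuity_pt_comp (fun z => Rmax z Rten) (Theta ep)).
    + apply cont_Rmax.
    + destruct (Theta_der ep (Rmax (rho b c x y) Rten)) as [H _]. eapply deriv_cont. exact H.
Qed.

Lemma fin_max (n : nat) (P : nat -> R -> R -> Prop) (Gf : nat -> R -> R -> R) :
  (1 <= n)%nat ->
  (forall k, (k < n)%nat -> exists x y, P k x y /\ forall x' y', P k x' y' -> Gf k x' y' <= Gf k x y) ->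
  exists k x y, (k < n)%nat /\ P k x y /\ forall k', (k' < n)%nat -> forall x' y', P k' x' y' -> Gf k' x' y' <= Gf k x y.
Proof.
  induction n as [|n IH]; intros Hn Hk; [lia|].
  destruct (Hk n ltac:(lia)) as (xn & yn & Pn & Mn).
  destruct (Nat.eq_dec n 0) as [->|Hn0].
  - exists 0%nat, xn, yn. split; [lia|]. split; auto. intros k' Hk' x' y' P'. assert (k' = 0%nat) by lia. subst. auto.
  - destruct (IH ltac:(lia) ltac:(intros k Hk'; apply Hk; lia)) as (k & x & y & Hkn & Pk & Mk).
    destruct (Rle_or_lt (Gf n xn yn) (Gf k x y)) as [Hle|Hlt].
    + exists k, x, y. split; [lia|]. split; auto. intros k' Hk' x' y' P'.
      destruct (Nat.eq_dec k' n) as [->|Hne]; [eapply Rle_trans; [apply Mn; auto| auto]| apply Mk; auto; lia].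
    + exists n, xn, yn. split; [lia|]. split; auto. intros k' Hk' x' y' P'.
      destruct (Nat.eq_dec k' n) as [->|Hne]; [apply Mn; auto| ].
      eapply Rle_trans; [apply Mk; auto; lia| lra].
Qed.

Lemma fin_bound (f : nat -> R) (n : nat) : exists K, forall i, (i < n)%nat -> f i <= K.
Proof.
  induction n as [|n [K HK]].
  - exists 0. intros; lia.
  - exists (Rmax K (f n)). intros i Hi. destruct (Nat.eq_dec i n) as [->|Hne]; [apply Rmax_r|].
    eapply Rle_trans; [apply HK; lia| apply Rmax_l].
Qed.


Lemma ln8_lt3 : ln 8 < 3.
Proof.
  assert (H := exp_cubic 3 ltac:(lra)). 
  assert (8 < exp 3) by lra. rewrite <- (ln_exp 3). apply ln_increasing; lra.
Qed.

Lemma ln8_pos : 0 < ln 8.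
Proof. rewrite <- ln_1. apply ln_increasing; lra. Qed.

Lemma decay (n : nat) (a b : nat -> R) (u : nat -> R -> R -> R)
  (hn : (1 <= n)%nat) (ha : forall i, (i < n)%nat -> 0 < a i)
  (hcont : forall i, (i < n)%nat -> forall x y, closed_half x y -> cont2 (u i) x y)
  (hC2 : forall i, (i < n)%nat -> C2_on open_half (u i))
  (hPDE : forall i, (i < n)%nat -> forall x y, open_half x y ->
            gauss_curv (u i) x y = -1 + phi_norm2 (u i) x y)
  (hglue : forall i, (i < n)%nat -> forall x y,
            let j := Nat.modulo (S i) n in
            in_B (b j - a j) x y ->
            u j x y = u i (glue_x (b j - a j) (b i) x y) (glue_y (b j - a j) (b i) x y)) :
  forall i, (i < n)%nat -> forall x y, 0 <= x -> Rten <= rho (b i) (b i - a i) x y ->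
    u i x y <= Phi (rho (b i) (b i - a i) x y).
Proof.
  intros i Hi xt yt Hxt Hrt.
  assert (HR10 : Rten = 10) by reflexivity.
  assert (Hfar := far_bound n a b u hn ha hcont hC2 hPDE hglue).
  assert (L8 := ln8_lt3). assert (L8p := ln8_pos).
  set (rt := rho (b i) (b i - a i) xt yt) in *.
  assert (Hmain : forall ep, 0 < ep -> u i xt yt <= Phi rt + ep * exp rt).
  { intros ep Hep.
    set (Lx := Rmax (rt + 1) (ln (3 / ep)) + 1).
    assert (HLx1 : rt + 1 < Lx) by (unfold Lx; assert (rt + 1 <= Rmax (rt + 1) (ln (3 / ep))) by apply Rmax_l; lra).
    assert (HLx2 : forall s, Lx <= s -> 3 < ep * exp s).
    { intros s Hs. assert (ln (3 / ep) < s) by (unfold Lx in Hs; assert (ln (3 / ep) <= Rmax (rt + 1) (ln (3 / ep))) by apply Rmax_r; lra).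
      assert (exp (ln (3 / ep)) < exp s) by (apply exp_increasing; auto).
      rewrite exp_ln in H0 by (apply Rdiv_lt_0_compat; lra).
      apply (Rmult_lt_compat_l ep) in H0; auto. replace (ep * (3 / ep)) with 3 in H0 by (field; lra). lra. }
    set (P := fun k x y => 0 <= x <= Lx /\ b k - a k - Lx <= y <= b k + Lx).
    set (Gf := fun k x y => Rmin (u k x y) (ln 8) - Theta ep (Rmax (rho (b k) (b k - a k) x y) Rten)).
    destruct (fin_max n P Gf hn) as (ks & xm & ym & Hks & Pm & Mm).
    { intros k Hk. assert (Hak := ha k Hk).
      assert (Hct : forall x y, 0 <= x <= Lx -> b k - a k - Lx <= y <= b k + Lx -> continuity_2d_pt (Gf k) x y).
      { intros x y Hx Hy. unfold Gf. apply cont_g. apply hcont; auto. unfold closed_half; lra. }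
      destruct (evt2 (Gf k) 0 Lx (b k - a k - Lx) (b k + Lx) ltac:(lra) ltac:(lra) Hct) as (x0 & y0 & Hx0 & Hy0 & HM).
      exists x0, y0. split; [unfold P; split; auto|]. intros x' y' HP. unfold P in HP. destruct HP as [Hx' Hy']. apply HM; auto. }
    set (M := Gf ks xm ym) in *.
    assert (HM0 : M <= 0).
    { destruct (Rle_or_lt M 0) as [|HMp]; auto. exfalso.
      assert (HPhiR : Phi Rten = 3) by apply Phi_R0.
      assert (Hreg : forall k x y, (k < n)%nat -> P k x y -> 0 < Gf k x y ->
                Rten < rho (b k) (b k - a k) x y < Lx).
      { intros k x y Hk Hp Hgp. unfold Gf in Hgp.
        assert (Rmin (u k x y) (ln 8) <= ln 8) by apply Rmin_r.
        set (r := rho (b k) (b k - a k) x y) in *.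
        split.
        - destruct (Rle_or_lt r Rten) as [Hle|]; auto. exfalso.
          rewrite Rmax_right in Hgp by lra. unfold Theta in Hgp. rewrite HPhiR in Hgp.
          assert (0 < ep * exp Rten) by (apply Rmult_lt_0_compat; auto; apply exp_pos). lra.
        - destruct (Rle_or_lt Lx r) as [Hle|]; auto. exfalso.
          rewrite Rmax_left in Hgp by (rewrite HR10 in *; lra). unfold Theta in Hgp.
          assert (3 < ep * exp r) by (apply HLx2; auto). assert (0 <= Phi r) by apply Phi_nonneg. lra. }
      assert (Hstart : exists k xs ys, (k < n)%nat /\ 0 < xs /\ P k xs ys /\ Gf k xs ys = M).
      { destruct (Rlt_or_le 0 xm) as [Hxm|Hxm].
        - exists ks, xm, ym. split; [auto|]. split; [auto|]. split; [exact Pm| reflexivity].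
        - assert (Hxm0 : xm = 0) by (unfold P in Pm; cbv beta in Pm; lra).
          destruct (Hreg ks xm ym Hks Pm HMp) as [Hr1 Hr2].
          assert (Hsq := rho_sq (b ks) (b ks - a ks) xm ym).
          assert (Hd0 := dseg_nonneg (b ks) (b ks - a ks) ym).
          assert (Hrn := rho_nonneg (b ks) (b ks - a ks) xm ym).
          set (r := rho (b ks) (b ks - a ks) xm ym) in *.
          set (d := dseg (b ks) (b ks - a ks) ym) in *.
          replace (xm^2) with 0 in Hsq by (rewrite Hxm0; ring).
          assert (Hdr : d = r) by (apply Rsqr_inj; [lra|lra|unfold Rsqr; simpl in Hsq; nra]).
          assert (S3p := s3pos).
          destruct (glue_move n a b u hn ha hglue ks Hks xm ym ltac:(lra) ltac:(fold d; rewrite HR10 in *; lra)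
              ltac:(fold d; rewrite Hxm0; assert (0 <= sqrt 3 * d) by (apply Rmult_le_pos; lra); lra))
            as (k' & x' & y' & Hk' & Hx' & Hu' & Hr').
          fold d in Hx'. fold r in Hr'.
          assert (Hx'pos : 0 < x') by (rewrite Hx', Hxm0; assert (0 < sqrt 3 * d) by (apply Rmult_lt_0_compat; rewrite HR10 in *; lra); lra).
          exists k', x', y'. split; auto. split; auto. split.
          + assert (Hak' := ha k' Hk').
            destruct (dseg_facts (b k') (b k' - a k') y' ltac:(lra)) as (F1 & F2 & _).
            assert (H1 := rho_ge_x (b k') (b k' - a k') x' y' ltac:(lra)).
            assert (H2 := rho_ge_d (b k') (b k' - a k') x' y').
            rewrite Hr' in H1, H2. unfold P. repeat split; lra.
          + unfold M, Gf. rewrite Hu', Hr'. reflexivity. }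
      destruct Hstart as (k & xs & ys & Hk & Hxs & Ps & Gs).
      destruct (Hreg k xs ys Hk Ps ltac:(rewrite Gs; auto)) as [Hr1 Hr2].
      assert (Hak := ha k Hk).
      assert (Hcb : b k - a k <= b k) by lra.
      assert (Hrx := rho_ge_x (b k) (b k - a k) xs ys ltac:(lra)).
      set (rs := rho (b k) (b k - a k) xs ys) in *.
      assert (Hrs : 10 < rs) by (rewrite HR10 in Hr1; auto).
      set (psi := fun x y => Theta ep (rho (b k) (b k - a k) x y)).
      assert (HGfeq : forall x y, 0 <= x -> Rten <= rho (b k) (b k - a k) x y -> Gf k x y = u k x y - psi x y).
      { intros x y Hx Hr. unfold Gf, psi. rewrite Rmax_left by lra.
        rewrite Rmin_left; auto. apply Hfar; auto. rewrite HR10 in Hr. lra. }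
      set (del := Rmin xs (Rmin (Lx - rs) (rs - Rten))).
      assert (Hdel : 0 < del) by (unfold del; repeat apply Rmin_pos; rewrite ?HR10; lra).
      assert (Hdx : del <= xs) by apply Rmin_l.
      assert (Hdl : del <= Lx - rs) by (unfold del; eapply Rle_trans; [apply Rmin_r| apply Rmin_l]).
      assert (Hdr : del <= rs - Rten) by (unfold del; eapply Rle_trans; [apply Rmin_r| apply Rmin_r]).
      rewrite HR10 in Hdr.
      assert (Hrs0 : 0 < rs) by lra.
      destruct (rho_yslice (b k) (b k - a k) xs ys Hcb Hrs0) as [gam [Hgam Hys]].
      fold rs in Hgam, Hys.
      assert (HPsd : P k xs ys) by exact Ps.
      unfold P in Ps; cbv beta in Ps.
      assert (Hbx : (xs / rs)^2 <= 1).
      { replace ((xs / rs)^2) with (xs^2 / rs^2) by (field; lra). 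
        apply (Rmult_le_reg_r (rs^2)); [nra|]. unfold Rdiv. rewrite Rmult_assoc, Rinv_l by nra. nra. }
      assert (Hby : (gam / rs)^2 <= 1).
      { replace ((gam / rs)^2) with (gam^2 / rs^2) by (field; lra).
        apply (Rmult_le_reg_r (rs^2)); [nra|]. unfold Rdiv. rewrite Rmult_assoc, Rinv_l by nra.
        assert (0 <= xs^2) by apply pow2_ge_0. nra. }
      assert (Hbx1 : Rabs (xs / rs) <= 1) by (apply Rabs_le; split; nra).
      assert (Hby1 : Rabs (gam / rs) <= 1) by (apply Rabs_le; split; nra).
      assert (Hm1 : forall h, Rabs h < del -> u k (xs + h) ys - u k xs ys <= psi (xs + h) ys - psi xs ys).
      { intros h Hh.
          destruct (rho_xslice (b k) (b k - a k) xs ys Hrs0 h) as [R1 _]. fold rs in R1.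
          assert (Hbh : Rabs (xs / rs * h) <= Rabs h) by (rewrite Rabs_mult; assert (0 <= Rabs h) by apply Rabs_pos; nra).
          apply abs_le in Hbh. apply Rabs_def2 in Hh.
          assert (0 <= Rabs h) by apply Rabs_pos.
          assert (Rabs h < del) by (unfold Rabs; destruct Rcase_abs; lra).
          assert (Hp : P k (xs + h) ys) by (unfold P; repeat split; lra).
          assert (HG := Mm k Hk (xs + h) ys Hp). fold M in HG. rewrite <- Gs in HG.
          rewrite (HGfeq (xs + h) ys ltac:(lra) ltac:(rewrite HR10; lra)) in HG.
          rewrite (HGfeq xs ys ltac:(lra) ltac:(fold rs; rewrite HR10; lra)) in HG. lra. }
      assert (Hm2 : forall h, Rabs h < del -> u k xs (ys + h) - u k xs ys <= psi xs (ys + h) - psi xs ys).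
      { intros h Hh.
          destruct (Hys h) as [R1 _].
          assert (Hbh : Rabs (gam / rs * h) <= Rabs h) by (rewrite Rabs_mult; assert (0 <= Rabs h) by apply Rabs_pos; nra).
          apply abs_le in Hbh.
          assert (Hdl' := dseg_lip (b k) (b k - a k) ys (ys + h)). replace (ys + h - ys) with h in Hdl' by ring.
          assert (Hdd := rho_ge_d (b k) (b k - a k) xs ys). fold rs in Hdd.
          destruct (dseg_facts (b k) (b k - a k) (ys + h) Hcb) as (F1 & F2 & _).
          apply abs_le in Hdl'. 
          assert (0 <= Rabs h) by apply Rabs_pos.
          assert (Rabs h < del) by auto.
          assert (Hp : P k xs (ys + h)) by (unfold P; repeat split; lra).
          assert (HG := Mm k Hk xs (ys + h) Hp). fold M in HG. rewrite <- Gs in HG.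
          rewrite (HGfeq xs (ys + h) ltac:(lra) ltac:(rewrite HR10; lra)) in HG.
          rewrite (HGfeq xs ys ltac:(lra) ltac:(fold rs; rewrite HR10; lra)) in HG. lra. }
      assert (Hp1 : forall eta, 0 < eta -> exists dl, 0 < dl /\ forall h, Rabs h < dl ->
          psi (xs + h) ys + psi (xs - h) ys - 2 * psi xs ys <= (Rmax (Theta1 ep rs) 0 / rs + Rmax (Theta2 ep rs) 0 * (xs / rs)^2 + eta) * h^2).
      { intros eta Heta.
          destruct (SL (Theta ep) (Theta1 ep) (Theta2 ep) rs (xs / rs) (fun h => rho (b k) (b k - a k) (xs + h) ys) 1
             Hrs0 Hbx ltac:(lra) (Theta_der ep) (Theta2_cont ep rs)
             ltac:(intros h _; destruct (rho_xslice (b k) (b k - a k) xs ys Hrs0 h) as [R1 R2]; fold rs in R1, R2; split; lra)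
             eta Heta) as [dl [Hdl0 Hsl]].
          exists dl. split; auto. }
      assert (Hp2 : forall eta, 0 < eta -> exists dl, 0 < dl /\ forall h, Rabs h < dl ->
          psi xs (ys + h) + psi xs (ys - h) - 2 * psi xs ys <= (Rmax (Theta1 ep rs) 0 / rs + Rmax (Theta2 ep rs) 0 * (gam / rs)^2 + eta) * h^2).
      { intros eta Heta.
          destruct (SL (Theta ep) (Theta1 ep) (Theta2 ep) rs (gam / rs) (fun h => rho (b k) (b k - a k) xs (ys + h)) 1
             Hrs0 Hby ltac:(lra) (Theta_der ep) (Theta2_cont ep rs)
             ltac:(intros h _; destruct (Hys h) as [R1 R2]; split; lra)
             eta Heta) as [dl [Hdl0 Hsl]].
          exists dl. split; auto. }
      assert (Hlap : laplacian (u k) xs ys <=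
         (Rmax (Theta1 ep rs) 0 / rs + Rmax (Theta2 ep rs) 0 * (xs / rs)^2) +
         (Rmax (Theta1 ep rs) 0 / rs + Rmax (Theta2 ep rs) 0 * (gam / rs)^2)).
      { apply (max2d (u k) psi xs ys del); auto. }
      assert (Hus : u k xs ys <= ln 8) by (apply Hfar; auto; [lra| fold rs; lra]).
      assert (HMeq : M = u k xs ys - Theta ep rs).
      { rewrite <- Gs. rewrite (HGfeq xs ys ltac:(lra) ltac:(fold rs; rewrite HR10; lra)). reflexivity. }
      rewrite (lap_F (u k) xs ys (hPDE k Hk xs ys Hxs)) in Hlap.
      set (E := ep * exp rs) in *.
      assert (HE : 0 < E) by (unfold E; apply Rmult_lt_0_compat; auto; apply exp_pos).
      assert (HPhi0 := Phi_nonneg rs).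
      assert (HTh : Theta ep rs = Phi rs + E) by reflexivity.
      assert (F1 := F_incr (Theta ep rs) M ltac:(lra) ltac:(lra)).
      replace (Theta ep rs + M) with (u k xs ys) in F1 by lra.
      assert (F2 := F_incr (Phi rs) E HPhi0 ltac:(lra)). rewrite <- HTh in F2.
      assert (HT1 : Rmax (Theta1 ep rs) 0 <= E).
      { apply Rmax_lub; [|lra]. unfold Theta1. assert (Phi1 rs <= 0) by (apply Phi1_nonpos; rewrite HR10; lra). fold E. lra. }
      assert (HT1' : 0 <= Rmax (Theta1 ep rs) 0) by apply Rmax_r.
      assert (HT2 : Rmax (Theta2 ep rs) 0 <= F (Phi rs) + E).
      { apply Rmax_lub.
        - unfold Theta2. fold E. rewrite Phi2_eq. assert (H6 := F_quad (Phi rs) HPhi0). lra.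
        - assert (H6 := F_nonneg (Phi rs) HPhi0). lra. }
      assert (HT2' : 0 <= Rmax (Theta2 ep rs) 0) by apply Rmax_r.
      assert (Hdiv : Rmax (Theta1 ep rs) 0 / rs <= E / 10).
      { apply (Rmult_le_reg_r rs); [lra|]. replace (Rmax (Theta1 ep rs) 0 / rs * rs) with (Rmax (Theta1 ep rs) 0) by (field; lra). nra. }
      assert (Hsum : (xs / rs)^2 + (gam / rs)^2 <= 1).
      { replace ((xs / rs)^2 + (gam / rs)^2) with ((xs^2 + gam^2) / rs^2) by (field; lra).
        apply (Rmult_le_reg_r (rs^2)); [nra|]. unfold Rdiv. rewrite Rmult_assoc, Rinv_l by nra. nra. }
      assert (Rmax (Theta2 ep rs) 0 * (xs / rs)^2 + Rmax (Theta2 ep rs) 0 * (gam / rs)^2 <= Rmax (Theta2 ep rs) 0) by nra.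
      lra. }
    assert (Pt : P i xt yt).
    { destruct (dseg_facts (b i) (b i - a i) yt ltac:(assert (Hai := ha i Hi); lra)) as (F1 & F2 & _).
      assert (rho_ge_x' := rho_ge_x (b i) (b i - a i) xt yt Hxt).
      assert (rho_ge_d' := rho_ge_d (b i) (b i - a i) xt yt).
      fold rt in rho_ge_x', rho_ge_d'. unfold P. repeat split; lra. }
    assert (Hg := Mm i Hi xt yt Pt). unfold Gf in Hg. fold rt in Hg.
    rewrite Rmax_left in Hg by (rewrite HR10 in *; lra).
    assert (Hu8 := Hfar i Hi xt yt Hxt ltac:(fold rt; rewrite HR10 in *; lra)).
    rewrite Rmin_left in Hg by lra. unfold Theta in Hg. lra. }
  destruct (Rle_or_lt (u i xt yt) (Phi rt)) as [|Hlt]; auto.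
  assert (He := exp_pos rt).
  assert (H := Hmain ((u i xt yt - Phi rt) / (2 * exp rt)) ltac:(apply Rdiv_lt_0_compat; lra)).
  replace ((u i xt yt - Phi rt) / (2 * exp rt) * exp rt) with ((u i xt yt - Phi rt) / 2) in H by (field; lra).
  lra.
Qed.


Theorem corollary5p3
  (n : nat) (hn : (1 <= n)%nat)
  (a b : nat -> R) (ha : forall i, (i < n)%nat -> 0 < a i)
  (u : nat -> R -> R -> R)
  (hcont : forall i, (i < n)%nat -> forall x y, closed_half x y -> cont2 (u i) x y)
  (hC2 : forall i, (i < n)%nat -> C2_on open_half (u i))
  (hPDE : forall i, (i < n)%nat -> forall x y, open_half x y ->
            gauss_curv (u i) x y = -1 + phi_norm2 (u i) x y)
  (hneg : forall i, (i < n)%nat -> forall x y, open_half x y ->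
            gauss_curv (u i) x y <= 0)
  (hglue : forall i, (i < n)%nat -> forall x y,
            let j := Nat.modulo (S i) n in
            in_B (b j - a j) x y ->
            u j x y = u i (glue_x (b j - a j) (b i) x y) (glue_y (b j - a j) (b i) x y)) :
  exists C r0 : R, 0 < C /\ 0 < r0 /\
    forall i, (i < n)%nat -> forall x y, closed_half x y -> r0 <= modw x y ->
      0 <= u i x y /\
      u i x y <= C * sqrt (modw x y) * exp (- sqrt 6 * modw x y).
Proof.
  destruct (fin_bound (fun i => Rabs (b i) + Rabs (b i - a i)) n) as [K HK].
  set (K' := Rmax K 0).
  assert (HK0 : 0 <= K') by apply Rmax_r.
  assert (HKK : forall i, (i < n)%nat -> Rabs (b i) + Rabs (b i - a i) <= K').
  { intros i Hi. eapply Rle_trans; [apply HK; auto| apply Rmax_l]. }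
  assert (HR10 : Rten = 10) by reflexivity.
  assert (S6 := s6pos).
  exists (12 * exp (sqrt 6 * (Rten + K'))), (Rten + K' + 1).
  split; [apply Rmult_lt_0_compat; [lra| apply exp_pos]|].
  split; [lra|].
  intros i Hi x y Hx Hr. unfold closed_half in Hx.
  split.
  -
    destruct (Rlt_or_le 0 x) as [Hxp|Hxp].
    + apply u_nonneg_pt; [apply hPDE| apply hneg]; auto.
    + assert (Hx0 : x = 0) by lra. subst x.
      destruct (Rle_or_lt 0 (u i 0 y)) as [|Hneg]; auto. exfalso.
      destruct (cont2_e _ _ _ (hcont i Hi 0 y (Rle_refl 0)) (- u i 0 y) ltac:(lra)) as [d [Hd Hc]].
      assert (H1 := Hc (d / 2) y ltac:(rewrite Rminus_0_r, Rabs_pos_eq; lra) ltac:(rewrite Rminus_diag, Rabs_R0; lra)).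
      assert (H2 : 0 <= u i (d / 2) y) by (apply u_nonneg_pt; [apply hPDE| apply hneg]; auto; unfold open_half; lra).
      apply Rabs_def2 in H1. lra.
  -
    assert (Hai := ha i Hi).
    set (rr := rho (b i) (b i - a i) x y).
    destruct (dseg_facts (b i) (b i - a i) y ltac:(lra)) as (F1 & F2 & _).
    assert (Hd := rho_ge_d (b i) (b i - a i) x y). fold rr in Hd.
    assert (Hsq := rho_sq (b i) (b i - a i) x y). fold rr in Hsq.
    assert (Hdn := dseg_nonneg (b i) (b i - a i) y).
    assert (Hrn := rho_nonneg (b i) (b i - a i) x y). fold rr in Hrn.
    assert (HKi := HKK i Hi).
    assert (Hb1 := Rle_abs (b i)). assert (Hb2 := Rle_abs (- b i)). rewrite Rabs_Ropp in Hb2.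
    assert (Hc1 := Rle_abs (b i - a i)). assert (Hc2 := Rle_abs (- (b i - a i))). rewrite Rabs_Ropp in Hc2.
    set (dd := dseg (b i) (b i - a i) y) in *.
    assert (Hy : Rabs y <= dd + K') by (unfold Rabs; destruct Rcase_abs; lra).
    assert (Hy2 : y^2 <= (dd + K')^2) by (rewrite <- pow2_abs; apply pow_incr; split; [apply Rabs_pos| auto]).
    assert (Hmw : modw x y <= rr + K').
    { unfold modw. rewrite <- (sqrt_pow2 (rr + K')) by lra. apply sqrt_le_1_alt. nra. }
    assert (Hrr : Rten <= rr) by lra.
    assert (Hdec := decay n a b u hn ha hcont hC2 hPDE hglue i Hi x y Hx Hrr). fold rr in Hdec.
    assert (HPE := Phi_le_E rr).
    assert (Hexp : Ef rr <= exp (sqrt 6 * (Rten + K')) * exp (- sqrt 6 * modw x y)).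
    { rewrite <- exp_plus. unfold Ef. apply exp_le_exp. nra. }
    assert (Hs1 : 1 <= sqrt (modw x y)).
    { rewrite <- sqrt_1. apply sqrt_le_1_alt. lra. }
    assert (0 < exp (sqrt 6 * (Rten + K')) * exp (- sqrt 6 * modw x y)) by (apply Rmult_lt_0_compat; apply exp_pos).
    nra.
Qed.
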